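(* With $Y_i$, $D_i$ and $T_{in}^{-1}$ as described in the context, for $1\le i<n$, $$[D_i,x_n^{-1}]=t^{2n-i-1}(t^{-1}-1)\,x_i^{-1}\,x_n^{-1}\,T_{in}^{-1}\,Y_i,$$ where $x_n^{-1}$ denotes the operator of multiplication by $x_n^{-1}$.
   Context: Let $n\ge2$, let $q,t$ be generic parameters, and let operators act on Laurent polynomials in $x=(x_1,\dots,x_n)$ with coefficients in $\mathbb{Q}(q,t)$. Let $s_i$ interchange $x_i,x_{i+1}$, and $(\tau_if)(x)=f(x_1,\dots,qx_i,\dots,x_n)$. Let $T_i=t+\frac{tx_i-x_{i+1}}{x_i-x_{i+1}}(s_i-1)$, $1\le i\le n-1$ (invertible, $T_i^{-1}=t^{-1}-1+t^{-1}T_i$). Let $\omega=s_{n-1}\cdots s_1\tau_1$ and $Y_i=t^{-n+i}T_i\cdots T_{n-1}\,\omega\,T_1^{-1}\cdots T_{i-1}^{-1}$. For $i<j$ let $T_{ij}^{-1}=T_i^{-1}\cdots T_{j-2}^{-1}T_{j-1}^{-1}T_{j-2}^{-1}\cdots T_i^{-1}$. The $q$-Dunkl operators are $D_i=x_i^{-1}\bigl(1-t^{n-1}[1+(t^{-1}-1)\sum_{j=i+1}^n t^{j-i}T_{ij}^{-1}]Y_i\bigr)$. *)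

(* Defs.v *)
(* Laurent polynomials in x_1..x_n over Q(q,t), realised inside
   the field of rational functions {fraction {mpoly F[n]}}, F = Q(q,t). *)
From HB Require Import structures.
From mathcomp Require Import all_boot all_order all_algebra.
From mathcomp Require Import mpoly fraction generic_quotient.
Notation "x %:F" := (@FracField.tofrac _ x) (format "x %:F").
Set Implicit Arguments. Unset Strict Implicit. Unset Printing Implicit Defensive.
Import Order.TTheory GRing.Theory Num.Theory.
Local Open Scope ring_scope.

Definition F : fieldType := {fraction {mpoly rat[2]}}.
Definition qq : F := ('X_(@Ordinal 2 0 isT) : {mpoly rat[2]})%:F.
Definition tt : F := ('X_(@Ordinal 2 1 isT) : {mpoly rat[2]})%:F.

Section Operators.
Variable n : nat.

Definition Pol := {mpoly F[n]}.
Definition L : fieldType := {fraction Pol}.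

(* the variable x_k, 1-based (x_k := 0 if k is out of range, never used) *)
Definition xv (k : nat) : Pol :=
  if @insub nat (fun j => j < n)%N _ k.-1 is Some j then 'X_j else 0.

Definition laurent (f : L) : Prop :=
  exists (p : Pol) (m : 'X_{1..n}), f = p%:F / ('X_[m] : Pol)%:F.

Definition swap_idx (i k : nat) : nat :=
  if k == i then i.+1 else if k == i.+1 then i else k.

Definition sP (i : nat) (p : Pol) : Pol :=
  comp_mpoly [tuple xv (swap_idx i j.+1) | j < n] p.
Definition tauP (i : nat) (p : Pol) : Pol :=
  comp_mpoly [tuple (if j.+1 == i then qq%:MP * 'X_j else 'X_j) | j < n] p.

Definition liftF (phi : Pol -> Pol) (f : L) : L :=
  (phi \n_(repr f))%:F / (phi \d_(repr f))%:F.

Definition op := L -> L.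
Definition opprod (l : seq op) : op := foldr (fun g h => g \o h) id l.

Definition X (k : nat) : L := (xv k)%:F.
Definition sc (c : F) : L := ((c%:MP : Pol))%:F.

Definition s (i : nat) : op := liftF (sP i).
Definition tau (i : nat) : op := liftF (tauP i).

Definition T (i : nat) : op := fun f =>
  sc tt * f + (sc tt * X i - X i.+1) / (X i - X i.+1) * (s i f - f).
Definition Tinv (i : nat) : op := fun f =>
  sc (tt^-1 - 1) * f + sc tt^-1 * T i f.

(* omega = s_{n-1} ... s_1 tau_1 *)
Definition omega : op := opprod (rev (map s (iota 1 n.-1)) ++ [:: tau 1]).

(* Y_i = t^{-n+i} T_i ... T_{n-1} omega T_1^{-1} ... T_{i-1}^{-1} *)
Definition Y (i : nat) : op := fun f =>
  sc (tt ^- (n - i)) *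
  opprod (map T (iota i (n - i)) ++ omega :: map Tinv (iota 1 i.-1)) f.

(* T_{ij}^{-1} = T_i^{-1} ... T_{j-2}^{-1} T_{j-1}^{-1} T_{j-2}^{-1} ... T_i^{-1} *)
Definition Tij_inv (i j : nat) : op :=
  opprod (map Tinv (iota i (j.-1 - i)) ++ Tinv j.-1
            :: rev (map Tinv (iota i (j.-1 - i)))).

Definition D (i : nat) : op := fun f =>
  (X i)^-1 * (f - sc (tt ^+ n.-1) *
     (Y i f + sc (tt^-1 - 1) *
        \sum_(i.+1 <= j < n.+1) sc (tt ^+ (j - i)) * Tij_inv i j (Y i f))).

End Operators.

(* Main.v *)
Require Import Defs.
From HB Require Import structures.
From mathcomp Require Import all_boot all_order all_algebra.
From mathcomp Require Import mpoly fraction generic_quotient.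
From mathcomp Require Import ring zify.
Import GRing.Theory.
Local Open Scope ring_scope.
Local Open Scope quotient_scope.

Section Frac.
Variable R : idomainType.
Lemma fracE (x : {fraction R}) :
  x = (\n_(repr x))%:F / (\d_(repr x))%:F.
Proof.
have hd : (\d_(repr x))%:F != 0 :> {fraction R} by rewrite tofrac_eq0 denom_ratioP.
apply: (mulIf hd); rewrite divfK // mulrC.
have E : forall a : R, a%:F = \pi_({fraction R}) (Ratio a 1).
  by move=> a; rewrite /FracField.tofrac; unlock.
rewrite !E -[x in _ * x]reprK.
have M : forall a b : {ratio R}, (\pi_({fraction R}) a) * \pi_({fraction R}) b = \pi_({fraction R}) (FracField.mulf a b) by move=> a b; exact: (esym (FracField.pi_mul a b)).
rewrite M.
apply/eqmodP; rewrite /= FracField.equivfE /FracField.mulf.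
rewrite !numden_Ratio ?mulf_neq0 ?denom_ratioP ?oner_neq0 //.
by rewrite mul1r mulr1 mulrC.
Qed.
End Frac.

Section Lift.
Variable R : idomainType.
Variable phi : R -> R.
Hypothesis hB : {morph phi : x y / x - y}.
Hypothesis hM : {morph phi : x y / x * y}.
Hypothesis h1 : phi 1 = 1.
Hypothesis hD : {morph phi : x y / x + y}.
Hypothesis hI : injective phi.

Definition liftG (f : {fraction R}) : {fraction R} :=
  (phi \n_(repr f))%:F / (phi \d_(repr f))%:F.

Lemma phi0 : phi 0 = 0.
Proof. by have := hB 1 1; rewrite !subrr. Qed.
Lemma phi_neq0 b : b != 0 -> phi b != 0.
Proof. move=> bn0; apply/negP => /eqP h; move/eqP: bn0; apply; apply: (hI b 0); rewrite h; exact: esym phi0. Qed.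

Lemma liftG_frac (a b : R) : b != 0 ->
  liftG (a%:F / b%:F) = (phi a)%:F / (phi b)%:F.
Proof.
move=> bn0.
rewrite /liftG.
set r := repr _.
have E := @fracE R (a%:F / b%:F).
rewrite -/r in E.
have dn0 : \d_r != 0 by apply: denom_ratioP.
have hb : b%:F != 0 :> {fraction R} by rewrite tofrac_eq0.
have hd : (\d_r)%:F != 0 :> {fraction R} by rewrite tofrac_eq0.
have cross : a * \d_r = \n_r * b.
  apply/eqP; rewrite -tofrac_eq !tofracM -eqr_div //; exact/eqP.
have pb : (phi b)%:F != 0 :> {fraction R} by rewrite tofrac_eq0 phi_neq0.
have pd : (phi \d_r)%:F != 0 :> {fraction R} by rewrite tofrac_eq0 phi_neq0.
by apply/eqP; rewrite eqr_div // -!tofracM -!hM -cross mulrC.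
Qed.

Lemma fracP (f : {fraction R}) : exists a b, b != 0 /\ f = a%:F / b%:F.
Proof. exists \n_(repr f), \d_(repr f); split; [exact: denom_ratioP | exact: fracE]. Qed.

Lemma liftGD : {morph liftG : x y / x + y}.
Proof.
move=> f g; have [a [b [b0 ->]]] := fracP f; have [c [d [d0 ->]]] := fracP g.
have bF : b%:F != 0 :> {fraction R} by rewrite tofrac_eq0.
have dF : d%:F != 0 :> {fraction R} by rewrite tofrac_eq0.
have pb := phi_neq0 _ b0; have pd := phi_neq0 _ d0.
have pbF : (phi b)%:F != 0 :> {fraction R} by rewrite tofrac_eq0.
have pdF : (phi d)%:F != 0 :> {fraction R} by rewrite tofrac_eq0.
rewrite addf_div // -!tofracM -tofracD !liftG_frac ?mulf_neq0 //.
by rewrite addf_div // -!tofracM -tofracD hD !hM.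
Qed.

Lemma liftGM : {morph liftG : x y / x * y}.
Proof.
move=> f g; have [a [b [b0 ->]]] := fracP f; have [c [d [d0 ->]]] := fracP g.
have pb := phi_neq0 _ b0; have pd := phi_neq0 _ d0.
rewrite mulf_div -!tofracM !liftG_frac ?mulf_neq0 //.
by rewrite mulf_div -!tofracM !hM.
Qed.

Lemma liftG1 : liftG 1 = 1.
Proof.
have := @liftG_frac 1 1 (oner_neq0 _).
by rewrite tofrac1 divr1 h1 divr1.
Qed.

Lemma liftG0 : liftG 0 = 0.
Proof.
have := @liftG_frac 0 1 (oner_neq0 _).
by rewrite tofrac0 mul0r phi0 tofrac0 mul0r.
Qed.

Lemma liftGB : {morph liftG : x y / x - y}.
Proof.
move=> f g.
have hN : liftG (- g) = - liftG g.
  apply/eqP; rewrite -subr_eq0 opprK -liftGD addNr liftG0 //.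
by rewrite liftGD hN.
Qed.

Lemma liftGV : {morph liftG : x / x^-1}.
Proof.
move=> f; have [a [b [b0 ->]]] := fracP f.
have [->|a0] := eqVneq a 0.
  by rewrite tofrac0 mul0r invr0 liftG0 invr0.
have pb := phi_neq0 _ b0; have pa := phi_neq0 _ a0.
by rewrite invf_div !liftG_frac // invf_div.
Qed.

Lemma liftG_tofrac a : liftG a%:F = (phi a)%:F.
Proof.
have := @liftG_frac a 1 (oner_neq0 _).
by rewrite tofrac1 divr1 h1 tofrac1 divr1.
Qed.

Lemma liftG_all :
  [/\ {morph liftG : x y / x - y}, {morph liftG : x y / x * y},
      {morph liftG : x / x^-1} & forall a, liftG a%:F = (phi a)%:F].
Proof.
have _ := hD; have _ := h1.
split; [exact: liftGB | exact: liftGM | exact: liftGV | exact: liftG_tofrac].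
Qed.

Lemma liftG_inv : (forall a, phi (phi a) = a) -> forall f, liftG (liftG f) = f.
Proof.
move=> K f; have [a [b [b0 ->]]] := fracP f.
have pb := phi_neq0 _ b0.
have ppb := phi_neq0 _ pb.
by rewrite !liftG_frac // !K.
Qed.
End Lift.

Lemma comp_mpoly_comp (R : comNzRingType) (n : nat) (lq lr : n.-tuple {mpoly R[n]}) (p : {mpoly R[n]}) :
  comp_mpoly lq (comp_mpoly lr p) = comp_mpoly [tuple comp_mpoly lq (tnth lr i) | i < n] p.
Proof.
elim/mpolyind: p => [|c m p _ _ IH]; first by rewrite !comp_mpoly0.
rewrite !comp_mpolyD IH !comp_mpolyZ !comp_mpolyX rmorph_prod.
under eq_bigr => i _ do rewrite rmorphXn.
under [in RHS]eq_bigr => i _ do rewrite tnth_mktuple.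
done.
Qed.

Section Abs.
Variables (F0 K : fieldType) (sc : F0 -> K) (tt : F0) (X : nat -> K)
  (s : nat -> K -> K) (tau1 : K -> K) (n : nat).

Definition aopprod (l : seq (K -> K)) : K -> K := foldr (fun g h => g \o h) id l.
Definition aT (i : nat) (f : K) : K :=
  sc tt * f + (sc tt * X i - X i.+1) / (X i - X i.+1) * (s i f - f).
Definition aTinv (i : nat) (f : K) : K :=
  sc (tt^-1 - 1) * f + sc tt^-1 * aT i f.
Definition aomega : K -> K := aopprod (rev (map s (iota 1 n.-1)) ++ [:: tau1]).
Definition aY (i : nat) (f : K) : K :=
  sc (tt ^- (n - i)) *
  aopprod (map aT (iota i (n - i)) ++ aomega :: map aTinv (iota 1 i.-1)) f.
Definition aTij_inv (i j : nat) : K -> K :=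
  aopprod (map aTinv (iota i (j.-1 - i)) ++ aTinv j.-1
            :: rev (map aTinv (iota i (j.-1 - i)))).
Definition aD (i : nat) (f : K) : K :=
  (X i)^-1 * (f - sc (tt ^+ n.-1) *
     (aY i f + sc (tt^-1 - 1) *
        \sum_(i.+1 <= j < n.+1) sc (tt ^+ (j - i)) * aTij_inv i j (aY i f))).

Hypothesis scB : {morph sc : a b / a - b}.
Hypothesis scM : {morph sc : a b / a * b}.
Hypothesis sc1 : sc 1 = 1.
Hypothesis tt0 : tt != 0.
Hypothesis n2 : (2 <= n)%N.
Definition valid k := (0 < k < n)%N.
Hypothesis sB : forall k, valid k -> {morph s k : a b / a - b}.
Hypothesis sM : forall k, valid k -> {morph s k : a b / a * b}.
Hypothesis sV : forall k, valid k -> {morph s k : a / a^-1}.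
Hypothesis sK : forall k, valid k -> involutive (s k).
Hypothesis s_sc : forall k a, valid k -> s k (sc a) = sc a.
Hypothesis sX1 : forall k, valid k -> s k (X k) = X k.+1.
Hypothesis sX2 : forall k, valid k -> s k (X k.+1) = X k.
Hypothesis sXn : forall k, (0 < k)%N -> (k.+1 < n)%N -> s k (X n) = X n.
Hypothesis tauM : {morph tau1 : a b / a * b}.
Hypothesis tauV : {morph tau1 : a / a^-1}.
Hypothesis tauXn : tau1 (X n) = X n.
Hypothesis Xneq : forall k, valid k -> X k - X k.+1 != 0.
Hypothesis X0 : forall k, (0 < k <= n)%N -> X k != 0.

Lemma sc0 : sc 0 = 0.
Proof. have := scB 0 0; rewrite subr0 subrr; exact. Qed.
Lemma scN a : sc (- a) = - sc a.
Proof. by rewrite -sub0r scB sc0 sub0r. Qed.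
Lemma scD a b : sc (a + b) = sc a + sc b.
Proof. by have := scB a (- b); rewrite opprK => ->; rewrite scN opprK. Qed.
Lemma scV a : a != 0 -> sc a^-1 = (sc a)^-1.
Proof.
move=> a0; have h : sc a * sc a^-1 = 1 by rewrite -scM mulfV // sc1.
have sa0 : sc a != 0 by apply: contra_eq_neq h => ->; rewrite mul0r eq_sym oner_eq0.
by apply: (mulfI sa0); rewrite h mulfV.
Qed.
Lemma scX a k : sc (a ^+ k) = sc a ^+ k.
Proof. by elim: k => [|k IH]; rewrite ?expr0 ?sc1 // !exprS scM IH. Qed.

Lemma s0 k : valid k -> s k 0 = 0.
Proof. by move=> v; have := sB k v 1 1; rewrite !subrr. Qed.
Lemma sN k a : valid k -> s k (- a) = - s k a.
Proof. by move=> v; rewrite -sub0r sB // s0 // sub0r. Qed.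
Lemma sD k a b : valid k -> s k (a + b) = s k a + s k b.
Proof. by move=> v; have := sB k v a (- b); rewrite opprK => ->; rewrite sN // opprK. Qed.


Lemma sc_t0 : sc tt != 0.
Proof.
have h : sc tt * sc tt^-1 = 1 by rewrite -scM mulfV // sc1.
by apply: contra_eq_neq h => ->; rewrite mul0r eq_sym oner_eq0.
Qed.
Lemma scTinv : sc (tt^-1 - 1) = (sc tt)^-1 - 1.
Proof. by rewrite scB scV // sc1. Qed.

Definition cc k := (sc tt * X k - X k.+1) / (X k - X k.+1).

Lemma T_mul k g f : valid k ->
  aT k (g * f) = s k g * aT k f + (g - s k g) * (sc tt - cc k) * f.
Proof. move=> v; rewrite /aT sM //; rewrite -/(cc k); ring. Qed.

Lemma T_comm k g f : valid k -> s k g = g -> aT k (g * f) = g * aT k f.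
Proof. by move=> v e; rewrite T_mul // e subrr !mul0r addr0. Qed.

Lemma T_add k f h : valid k -> aT k (f + h) = aT k f + aT k h.
Proof. move=> v; rewrite /aT sD //; ring. Qed.

Lemma Tinv_comm k g f : valid k -> s k g = g -> aTinv k (g * f) = g * aTinv k f.
Proof. by move=> v e; rewrite /aTinv T_comm //; ring. Qed.

Lemma Tinv_add k f h : valid k -> aTinv k (f + h) = aTinv k f + aTinv k h.
Proof. by move=> v; rewrite /aTinv T_add //; ring. Qed.

Lemma Tinv_sc k a f : valid k -> aTinv k (sc a * f) = sc a * aTinv k f.
Proof. by move=> v; apply: Tinv_comm; rewrite // s_sc. Qed.
Lemma T_sc k a f : valid k -> aT k (sc a * f) = sc a * aT k f.
Proof. by move=> v; apply: T_comm; rewrite // s_sc. Qed.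

Lemma scc k : valid k -> s k (cc k) = (sc tt * X k.+1 - X k) / (X k.+1 - X k).
Proof. by move=> v; rewrite /cc sM // sV // !sB // sM // s_sc // sX1 // sX2. Qed.

Lemma TinvT k f : valid k -> aTinv k (aT k f) = f.
Proof.
move=> v; rewrite /aTinv scTinv /aT.
rewrite sD //; rewrite ?(sM, sV, sB, s_sc, sX1, sX2, sK) //.
rewrite /cc.
have h1 := Xneq k v. have h2 := sc_t0.
have h3 : X k.+1 - X k != 0 by rewrite -opprB oppr_eq0.
rewrite scV //.
move: h1 h2 h3; set x := X k; set y := X k.+1; set a := f; set b := s k f; set t := sc tt.
move=> h1 h2 h3.
field.
by rewrite h1 h2 h3.
Qed.

Lemma aopprod_cat l1 l2 f : aopprod (l1 ++ l2) f = aopprod l1 (aopprod l2 f).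
Proof. by elim: l1 => [|g l IH] //=; rewrite IH. Qed.

Lemma Tinv0 k : valid k -> aTinv k 0 = 0.
Proof. by move=> v; rewrite /aTinv /aT s0 //; ring. Qed.

Lemma TinvL_comm l g f : all valid l -> (forall k, k \in l -> s k g = g) ->
  aopprod (map aTinv l) (g * f) = g * aopprod (map aTinv l) f.
Proof.
elim: l => [|k l IH] //= /andP [vk vl] e.
rewrite IH //; last by move=> k' h; apply: e; rewrite inE h orbT.
by rewrite Tinv_comm // e // inE eqxx.
Qed.

Lemma TinvL_add l f h : all valid l ->
  aopprod (map aTinv l) (f + h) = aopprod (map aTinv l) f + aopprod (map aTinv l) h.
Proof. by elim: l => [|k l IH] //= /andP [vk vl]; rewrite IH // Tinv_add. Qed.

Lemma TinvL0 l : all valid l -> aopprod (map aTinv l) 0 = 0.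
Proof. by elim: l => [|k l IH] //= /andP [vk vl]; rewrite IH // Tinv0. Qed.

Lemma TinvL_sc l a f : all valid l ->
  aopprod (map aTinv l) (sc a * f) = sc a * aopprod (map aTinv l) f.
Proof.
move=> vl; apply: TinvL_comm => // k kl; apply: s_sc.
by move/allP: vl; apply.
Qed.

Lemma TinvL_sum l (I : Type) (r : seq I) (P : pred I) (G : I -> K) : all valid l ->
  aopprod (map aTinv l) (\sum_(i <- r | P i) G i) =
  \sum_(i <- r | P i) aopprod (map aTinv l) (G i).
Proof.
move=> vl; elim: r => [|x r IH]; first by rewrite !big_nil TinvL0.
by rewrite !big_cons; case: (P x); rewrite ?TinvL_add // IH.
Qed.

Lemma cancelL l w : all valid l ->
  aopprod (rev (map aTinv l)) (aopprod (map aT l) w) = w.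
Proof.
elim: l w => [|k l IH] w //= /andP [vk vl].
by rewrite rev_cons -cats1 aopprod_cat /= TinvT // IH.
Qed.

Definition tl i j := iota i (j.-1 - i) ++ j.-1 :: rev (iota i (j.-1 - i)).
Lemma TijE i j f : aTij_inv i j f = aopprod (map aTinv (tl i j)) f.
Proof. by rewrite /aTij_inv /tl map_cat /= map_rev. Qed.

Lemma valid_tl i j : (0 < i)%N -> (i < j <= n)%N -> all valid (tl i j).
Proof.
move=> i0 /andP [ij jn]; apply/allP => k.
rewrite /tl mem_cat inE mem_rev mem_iota /valid => /orP [|/orP []] h; lia.
Qed.

Definition Mop i g := aopprod (map aTinv (iota i (n - i)) ++ aomega :: map aTinv (iota 1 i.-1)) g.
Definition Kop i g := aY i g + sc (tt^-1 - 1) *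
   \sum_(i.+1 <= j < n.+1) sc (tt ^+ (j - i)) * aTij_inv i j (aY i g).

Lemma iota_rcons i : (0 < i)%N -> iota 1 i = rcons (iota 1 i.-1) i.
Proof. by case: i => // i _; rewrite -[in LHS](addn1 i) iotaD add1n cats1. Qed.

Lemma peel_right (A : seq (K -> K)) (Q : seq nat) i g : valid i ->
  aopprod (A ++ aomega :: map aTinv (rcons Q i)) (aT i g) = aopprod (A ++ aomega :: map aTinv Q) g.
Proof. by move=> v; rewrite map_rcons -cats1 -cat_cons catA aopprod_cat /= TinvT. Qed.

Lemma Y_step i g : (0 < i)%N -> (i < n)%N ->
  aY i g = sc tt^-1 * aT i (aY i.+1 (aT i g)).
Proof.
move=> i0 iN; have v : valid i by rewrite /valid i0 iN.
rewrite /aY /= (@iota_rcons i i0) peel_right //.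
have -> : (n - i = (n - i.+1).+1)%N by lia.
rewrite T_sc // mulrA -scM -invfM -exprS /=.
congr (_ * _).
Qed.

Lemma Tij_peel i j h : (0 < i)%N -> (i.+1 < j <= n)%N ->
  aTij_inv i j h = aTinv i (aTij_inv i.+1 j (aTinv i h)).
Proof.
move=> i0 ij.
rewrite /aTij_inv.
have -> : (j.-1 - i = (j.-1 - i.+1).+1)%N by lia.
rewrite /= rev_cons -cats1 -cat_cons catA aopprod_cat //.
Qed.

Lemma Tij_first i h : aTij_inv i i.+1 h = aTinv i h.
Proof. by rewrite /aTij_inv /= subnn. Qed.

Lemma Mop_step i g : (0 < i)%N -> (i < n)%N ->
  Mop i g = aTinv i (Mop i.+1 (aT i g)).
Proof.
move=> i0 iN; have v : valid i by rewrite /valid i0 iN.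
rewrite /Mop /= (@iota_rcons i i0) peel_right //.
have -> : (n - i = (n - i.+1).+1)%N by lia.
by [].
Qed.

Lemma Kop_base g : Kop n g = Mop n g.
Proof.
rewrite /Kop /Mop /aY subnn expr0 invr1 sc1 mul1r big_geq // mulr0 addr0 //.
Qed.

Lemma valid_tl1 i j : (0 < i)%N -> (i < j <= n)%N -> all valid (i :: tl i j).
Proof.
move=> i0 ij; rewrite /= valid_tl // andbT /valid; lia.
Qed.

Lemma K_step i g : (0 < i)%N -> (i < n)%N ->
  (forall g, Kop i.+1 g = Mop i.+1 g) -> Kop i g = Mop i g.
Proof.
move=> i0 iN IH; have v : valid i by rewrite /valid i0 iN.
set z := aY i.+1 (aT i g).
have hY : aY i g = sc tt^-1 * aT i z by rewrite Y_step.
have hTh : aTinv i (aY i g) = sc tt^-1 * z by rewrite hY Tinv_sc // TinvT.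
set S' := \sum_(i.+2 <= j < n.+1) sc (tt ^+ (j - i.+1)) * aTij_inv i.+1 j z.
have HK : Kop i.+1 (aT i g) = z + sc (tt^-1 - 1) * S' by [].
rewrite IH in HK.
have Hsum : \sum_(i.+1 <= j < n.+1) sc (tt ^+ (j - i)) * aTij_inv i j (aY i g)
   = sc tt * (sc tt^-1 * z) + aTinv i S'.
  rewrite big_ltn; last by lia.
  rewrite Tij_first hTh subSnn expr1.
  congr (_ + _).
  rewrite /S' -[aTinv i _]/(aopprod (map aTinv [:: i]) _) TinvL_sum /=; last by rewrite /valid i0 iN.
  apply: eq_big_nat => j /andP [ij jn].
  rewrite Tij_peel //; last by lia.
  rewrite hTh !TijE TinvL_sc; last by apply: valid_tl; lia.
  rewrite !Tinv_sc // mulrA -!scM; congr (sc _ * _).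
  have -> : (j - i = (j - i.+1).+1)%N by lia.
  by rewrite exprS mulrAC mulfV // mul1r.

rewrite Mop_step //.
rewrite HK /Kop Hsum Tinv_add // Tinv_sc // hY.
rewrite [aTinv i z]/aTinv mulrA -scM mulfV // sc1 mul1r.
ring.
Qed.

Lemma KM i g : (0 < i <= n)%N -> Kop i g = Mop i g.
Proof.
move=> h; have [m e] : exists m, (n - i = m)%N by eexists.
elim: m i h g e => [|m IH] i h g e.
  have -> : i = n by lia.
  exact: Kop_base.
apply: K_step; try lia.
move=> g'; apply: IH; lia.
Qed.

Definition Rop i g := aopprod (map aTinv (iota i (n.-1 - i)) ++ aomega :: map aTinv (iota 1 i.-1)) g.

Lemma iota_last i : (0 < i)%N -> (i < n)%N -> iota i (n - i) = rcons (iota i (n.-1 - i)) n.-1.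
Proof.
move=> i0 iN; have -> : (n - i = (n.-1 - i) + 1)%N by lia.
rewrite iotaD cats1; congr (rcons _ _); lia.
Qed.

Lemma Tn i g : (0 < i)%N -> (i < n)%N ->
  aTij_inv i n (aY i g) = sc (tt ^- (n - i)) * Rop i g.
Proof.
move=> i0 iN.
have vA : all valid (iota i (n.-1 - i)).
  by apply/allP => k; rewrite mem_iota /valid; lia.
have vn : valid n.-1 by rewrite /valid; lia.
rewrite TijE /aY TinvL_sc; last by apply: valid_tl; lia.
congr (_ * _).
rewrite /tl map_cat /= aopprod_cat /= map_rev.
rewrite (@iota_last i i0 iN) map_rcons -cats1 -catA aopprod_cat /= cancelL //.
by rewrite TinvT // /Rop aopprod_cat.
Qed.

Lemma sL_M l a b : all valid l ->
  aopprod (map s l ++ [:: tau1]) (a * b) =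
  aopprod (map s l ++ [:: tau1]) a * aopprod (map s l ++ [:: tau1]) b.
Proof.
elim: l => [|k l IH] /=; first by rewrite tauM.
by move=> /andP [vk vl]; rewrite IH // sM.
Qed.

Lemma sL_u l : all (fun k => (0 < k)%N && (k.+1 < n)%N) l ->
  aopprod (map s l ++ [:: tau1]) (X n)^-1 = (X n)^-1.
Proof.
elim: l => [|k l IH] /=; first by rewrite tauV tauXn.
move=> /andP [/andP [k0 kn] vl]; rewrite IH //.
have vk : valid k by rewrite /valid k0; lia.
by rewrite sV // sXn.
Qed.

Lemma omega_split : aomega = s n.-1 \o aopprod (map s (rev (iota 1 n.-2)) ++ [:: tau1]).
Proof.
rewrite /aomega -map_rev.
have -> : iota 1 n.-1 = rcons (iota 1 n.-2) n.-1.
  rewrite -(@iota_rcons n.-1); last by lia.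
  by [].
by rewrite rev_rcons.
Qed.

Lemma omegaM a b : aomega (a * b) = aomega a * aomega b.
Proof.
have vn : valid n.-1 by rewrite /valid; lia.
rewrite omega_split /= sL_M ?sM //.
by apply/allP => k; rewrite mem_rev mem_iota /valid; lia.
Qed.

Lemma omega_u : aomega (X n)^-1 = (X n.-1)^-1.
Proof.
have vn : valid n.-1 by rewrite /valid; lia.
rewrite omega_split /= sL_u; last by apply/allP => k; rewrite mem_rev mem_iota; lia.
rewrite sV //.
have e : X n = X n.-1.+1 by congr X; lia.
by rewrite e sX2.
Qed.

Lemma Tinv_w k v : valid k ->
  aTinv k ((X k)^-1 * v) = sc tt^-1 * ((X k.+1)^-1 * aT k v).
Proof.
move=> vk; rewrite /aTinv /aT sM // sV // sX1 // scTinv scV //.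
have h1 := Xneq k vk. have h2 := sc_t0.
have h3 : X k != 0 by apply: X0; rewrite /valid in vk; lia.
have h4 : X k.+1 != 0 by apply: X0; rewrite /valid in vk; lia.
move: h1 h2 h3 h4; set x := X k; set y := X k.+1; set a := v; set b := s k v; set t := sc tt.
move=> h1 h2 h3 h4.
field.
by rewrite h1 h2 h3 h4.
Qed.

Lemma u_fix k : (0 < k)%N -> (k.+1 < n)%N -> s k (X n)^-1 = (X n)^-1.
Proof. by move=> k0 kn; rewrite sV ?sXn // /valid k0; lia. Qed.

Lemma Mu i g : (0 < i)%N -> (i < n)%N ->
  Mop i ((X n)^-1 * g) - (X n)^-1 * Mop i g = sc (1 - tt^-1) * (X n)^-1 * Rop i g.
Proof.
move=> i0 iN.
have vA : all valid (iota i (n.-1 - i)).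
  by apply/allP => k; rewrite mem_iota /valid; lia.
have vQ : all valid (iota 1 i.-1).
  by apply/allP => k; rewrite mem_iota /valid; lia.
have vn : valid n.-1 by rewrite /valid; lia.
have uA : forall k, k \in iota i (n.-1 - i) -> s k (X n)^-1 = (X n)^-1.
  by move=> k; rewrite mem_iota => h; apply: u_fix; lia.
have uQ : forall k, k \in iota 1 i.-1 -> s k (X n)^-1 = (X n)^-1.
  by move=> k; rewrite mem_iota => h; apply: u_fix; lia.
rewrite /Mop /Rop (@iota_last i i0 iN) map_rcons -cats1 -!catA !aopprod_cat /=.
rewrite TinvL_comm // omegaM omega_u.
set v := aomega _.
rewrite Tinv_w //.
have e : X n.-1.+1 = X n by congr X; lia.
rewrite e.
set R := aopprod (map aTinv (iota i (n.-1 - i))).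
have -> : sc tt^-1 * ((X n)^-1 * aT n.-1 v) = (X n)^-1 * (sc tt^-1 * aT n.-1 v) by ring.
rewrite /R TinvL_comm // -/R.
rewrite /aTinv /R TinvL_add // !TinvL_sc // -/R.
rewrite !scB sc1 scV //.
ring.
Qed.

Theorem abs_main i f : (0 < i)%N -> (i < n)%N ->
  aD i ((X n)^-1 * f) - (X n)^-1 * aD i f =
  sc (tt ^+ (2 * n - i - 1) * (tt^-1 - 1)) * (X i)^-1 * (X n)^-1
    * aTij_inv i n (aY i f).
Proof.
move=> i0 iN.
have h : (0 < i <= n)%N by lia.
have k1 := KM i ((X n)^-1 * f) h. have k2 := KM i f h.
rewrite /Kop in k1 k2.
rewrite /aD k1 k2 Tn //.
have M := Mu i f i0 iN.
have -> : (X i)^-1 * ((X n)^-1 * f - sc (tt ^+ n.-1) * Mop i ((X n)^-1 * f)) -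
   (X n)^-1 * ((X i)^-1 * (f - sc (tt ^+ n.-1) * Mop i f)) =
   - (X i)^-1 * sc (tt ^+ n.-1) * (Mop i ((X n)^-1 * f) - (X n)^-1 * Mop i f) by ring.
rewrite M.
have E : (2 * n - i - 1 = n.-1 + (n - i))%N by lia.
rewrite E exprD.
have hA : tt ^+ (n - i) != 0 by rewrite expf_neq0.
rewrite !scM scV // !scB sc1 scV //.
have hA' : sc (tt ^+ (n - i)) != 0.
  apply/negP => /eqP e0.
  have : sc (tt ^+ (n - i)) * sc (tt ^+ (n - i))^-1 = 1 by rewrite -scM mulfV // sc1.
  by rewrite e0 mul0r => /eqP; rewrite eq_sym oner_eq0.
move: hA'; set A := sc (tt ^+ (n - i)); set B := sc (tt ^+ n.-1); set t := sc tt.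
move=> hA'.
have ht := sc_t0.
field.
by rewrite hA' ht !X0 //; lia.
Qed.
End Abs.

Lemma c_qq0 : qq != 0.
Proof.
rewrite /qq tofrac_eq0.
apply/eqP => e.
have := congr1 (fun p : {mpoly rat[2]} => p@_U_(@Ordinal 2 0 isT)) e.
rewrite mcoeffXU eqxx mcoeff0 /=.
by move/eqP; rewrite oner_eq0.
Qed.
Lemma c_tt0 : tt != 0.
Proof.
rewrite /tt tofrac_eq0.
apply/eqP => e.
have := congr1 (fun p : {mpoly rat[2]} => p@_U_(@Ordinal 2 1 isT)) e.
rewrite mcoeffXU eqxx mcoeff0 /=.
by move/eqP; rewrite oner_eq0.
Qed.

Section Conc.
Variable n : nat.

Lemma c_scB : {morph (@sc n) : a b / a - b}.
Proof. by move=> a b; rewrite /sc raddfB tofracB. Qed.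
Lemma c_scM : {morph (@sc n) : a b / a * b}.
Proof. by move=> a b; rewrite /sc rmorphM tofracM. Qed.
Lemma c_sc1 : sc n 1 = 1.
Proof. rewrite /sc rmorph1; exact: tofrac1. Qed.

Lemma xvE k (hk : (k.-1 < n)%N) : (0 < k)%N -> xv n k = 'X_(Ordinal hk).
Proof.
move=> k0; rewrite /xv insubT /=; congr ('X_ _); exact: val_inj.
Qed.

Definition lqs k := [tuple xv n (swap_idx k j.+1) | j < n].

Lemma swapK k m : swap_idx k (swap_idx k m) = m.
Proof. rewrite /swap_idx; do ! case: eqP => /=; lia. Qed.

Lemma swap_range k m : (0 < k < n)%N -> (0 < m <= n)%N -> (0 < swap_idx k m <= n)%N.
Proof. rewrite /swap_idx; do ! case: eqP => /=; lia. Qed.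

Lemma sP_xv k m : (0 < k < n)%N -> (0 < m <= n)%N ->
  comp_mpoly (lqs k) (xv n m) = xv n (swap_idx k m).
Proof.
move=> hk hm.
have hm' : (m.-1 < n)%N by lia.
rewrite (@xvE m hm'); last by lia.
rewrite comp_mpolyXU -(tnth_nth 0 (lqs k) (Ordinal hm')) tnth_mktuple /=.
have -> : m.-1.+1 = m by lia.
by [].
Qed.

Lemma sP_inv k p : (0 < k < n)%N -> comp_mpoly (lqs k) (comp_mpoly (lqs k) p) = p.
Proof.
move=> hk; rewrite comp_mpoly_comp.
rewrite -[in RHS](comp_mpoly_id p).
apply: (congr1 (fun lq => comp_mpoly lq p)).
apply: eq_from_tnth => j; rewrite !tnth_mktuple.
have hj : (0 < j.+1 <= n)%N by have := ltn_ord j; lia.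
rewrite sP_xv //; last exact: swap_range.
by rewrite swapK (@xvE j.+1 (ltn_ord j)) //.

Qed.

Lemma sP_hyps k : (0 < k < n)%N ->
  [/\ {morph @sP n k : x y / x - y}, {morph @sP n k : x y / x * y}, @sP n k 1 = 1,
      {morph @sP n k : x y / x + y} & injective (@sP n k)].
Proof.
move=> hk; split.
- exact: comp_mpolyB.
- move=> x y; exact: rmorphM.
- exact: comp_mpoly1.
- exact: comp_mpolyD.
- apply: (can_inj (g := @sP n k)) => p; exact: sP_inv.
Qed.

Lemma s_all k : (0 < k < n)%N ->
  [/\ {morph @s n k : x y / x - y}, {morph @s n k : x y / x * y},
      {morph @s n k : x / x^-1} & forall a, @s n k a%:F = (@sP n k a)%:F].
Proof.
move=> hk; have [hB hM h1 hD hI] := sP_hyps k hk.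
exact: (@liftG_all (Pol n) (@sP n k) hB hM h1 hD hI).
Qed.

Lemma s_inv k : (0 < k < n)%N -> involutive (@s n k).
Proof.
move=> hk; have [hB hM h1 hD hI] := sP_hyps k hk.
exact: (@liftG_inv (Pol n) (@sP n k) hB hM hI (fun p => sP_inv k p hk)).
Qed.

Lemma c_s_sc k a : (0 < k < n)%N -> @s n k (sc n a) = sc n a.
Proof.
move=> hk; have [_ _ _ hT] := s_all k hk.
by rewrite /sc hT /sP comp_mpolyC.
Qed.

Lemma c_sX k m : (0 < k < n)%N -> (0 < m <= n)%N -> @s n k (X n m) = X n (swap_idx k m).
Proof.
move=> hk hm; have [_ _ _ hT] := s_all k hk.
by rewrite /X hT /sP -/(lqs k) sP_xv.
Qed.

Lemma X_neq (a b : 'I_n) : a != b -> ('X_a : Pol n) != 'X_b.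
Proof.
move=> ab; apply/eqP => e.
have := congr1 (fun p : Pol n => p@_U_(a)) e.
rewrite !mcoeffXU eqxx eq_sym (negbTE ab) /=.
by move/eqP; rewrite oner_eq0.
Qed.

Lemma X_neq0 (a : 'I_n) : ('X_a : Pol n) != 0.
Proof.
apply/eqP => e.
have := congr1 (fun p : Pol n => p@_U_(a)) e.
rewrite mcoeffXU eqxx mcoeff0 /=.
by move/eqP; rewrite oner_eq0.
Qed.

Lemma c_Xneq k : (0 < k < n)%N -> X n k - X n k.+1 != 0.
Proof.
move=> hk; rewrite /X -tofracB tofrac_eq0 subr_eq0.
have h1 : (k.-1 < n)%N by lia.
have h2 : (k.+1.-1 < n)%N by lia.
rewrite (@xvE k h1); last by lia.
rewrite (@xvE k.+1 h2) //.
apply: X_neq; apply/eqP => e; have := congr1 val e => /=; lia.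
Qed.

Lemma c_X0 k : (0 < k <= n)%N -> X n k != 0.
Proof.
move=> hk; rewrite /X tofrac_eq0.
have h1 : (k.-1 < n)%N by lia.
rewrite (@xvE k h1); last by lia.
exact: X_neq0.
Qed.

Definition lqt (c : F) := [tuple (if j.+1 == 1%N then c%:MP * 'X_j else 'X_j) | j < n] : n.-tuple (Pol n).

Lemma comp_lqt_X c (j : 'I_n) : comp_mpoly (lqt c) 'X_j = (if j.+1 == 1%N then c%:MP * 'X_j else 'X_j).
Proof. by rewrite comp_mpolyXU -(tnth_nth 0 (lqt c) j) tnth_mktuple. Qed.

Lemma tauP_inv p : comp_mpoly (lqt qq^-1) (comp_mpoly (lqt qq) p) = p.
Proof.
rewrite comp_mpoly_comp.
rewrite -[in RHS](comp_mpoly_id p).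
apply: (congr1 (fun lq => comp_mpoly lq p)).
apply: eq_from_tnth => j; rewrite !tnth_mktuple.
case: eqP => [e|ne]; last by rewrite comp_lqt_X; case: eqP.
rewrite rmorphM /= comp_mpolyC comp_lqt_X e eqxx mulrA -rmorphM /=.
by rewrite mulfV ?c_qq0 // mul1r.
Qed.

Lemma tauP_hyps :
  [/\ {morph @tauP n 1 : x y / x - y}, {morph @tauP n 1 : x y / x * y}, @tauP n 1 1 = 1,
      {morph @tauP n 1 : x y / x + y} & injective (@tauP n 1)].
Proof.
split.
- exact: comp_mpolyB.
- move=> x y; exact: rmorphM.
- exact: comp_mpoly1.
- exact: comp_mpolyD.
- apply: (can_inj (g := comp_mpoly (lqt qq^-1))) => p; exact: tauP_inv.
Qed.

Lemma tau_all :
  [/\ {morph @tau n 1 : x y / x - y}, {morph @tau n 1 : x y / x * y},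
      {morph @tau n 1 : x / x^-1} & forall a, @tau n 1 a%:F = (@tauP n 1 a)%:F].
Proof.
have [hB hM h1 hD hI] := tauP_hyps.
exact: (@liftG_all (Pol n) (@tauP n 1) hB hM h1 hD hI).
Qed.

Lemma c_tauXn : (2 <= n)%N -> @tau n 1 (X n n) = X n n.
Proof.
move=> n2; have [_ _ _ hT] := tau_all.
have h1 : (n.-1 < n)%N by lia.
rewrite /X hT /tauP -/(lqt qq) (@xvE n h1); last by lia.
rewrite comp_lqt_X /=.
by have -> : (n.-1.+1 == 1)%N = false by apply/eqP; lia.
Qed.
End Conc.

Theorem lemma3p4 (n : nat) (hn : (2 <= n)%N) (i : nat) (hi : (1 <= i < n)%N)
  (f : L n) (hf : laurent f) :
  D i ((X n n)^-1 * f) - (X n n)^-1 * D i f =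
  sc n (tt ^+ (2 * n - i - 1) * (tt^-1 - 1)) * (X n i)^-1 * (X n n)^-1
    * Tij_inv i n (Y i f).
Proof.
case/andP: hi => i0 iN.
have sB : forall k, (0 < k < n)%N -> {morph @s n k : a b / a - b}.
  by move=> k v; case: (s_all n k v).
have sM : forall k, (0 < k < n)%N -> {morph @s n k : a b / a * b}.
  by move=> k v; case: (s_all n k v).
have sV : forall k, (0 < k < n)%N -> {morph @s n k : a / a^-1}.
  by move=> k v; case: (s_all n k v).
have sK : forall k, (0 < k < n)%N -> involutive (@s n k).
  by move=> k v; apply: s_inv.
have s_sc : forall k a, (0 < k < n)%N -> @s n k (sc n a) = sc n a.
  by move=> k a v; apply: c_s_sc.
have sX1 : forall k, (0 < k < n)%N -> @s n k (X n k) = X n k.+1.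
  move=> k v; rewrite c_sX //; last by lia.
  by rewrite /swap_idx eqxx.
have sX2 : forall k, (0 < k < n)%N -> @s n k (X n k.+1) = X n k.
  move=> k v; rewrite c_sX //; last by lia.
  rewrite /swap_idx; case: eqP => [|_]; first by lia.
  by rewrite eqxx.
have sXn : forall k, (0 < k)%N -> (k.+1 < n)%N -> @s n k (X n n) = X n n.
  move=> k k0 kn; rewrite c_sX //; try lia.
  rewrite /swap_idx; case: eqP => [|_]; first by lia.
  by case: eqP => [|_] //; lia.
have tauM : {morph @tau n 1 : a b / a * b} by case: (tau_all n).
have tauV : {morph @tau n 1 : a / a^-1} by case: (tau_all n).
have tauXn := c_tauXn n hn.
have Xneq : forall k, (0 < k < n)%N -> X n k - X n k.+1 != 0.
  by move=> k v; apply: c_Xneq.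
have X0 : forall k, (0 < k <= n)%N -> X n k != 0.
  by move=> k v; apply: c_X0.
exact: (@abs_main F (L n) (@sc n) tt (@X n) (@s n) (@tau n 1) n
  (@c_scB n) (@c_scM n) (@c_sc1 n) c_tt0 hn sB sM sV sK s_sc sX1 sX2 sXn
  tauM tauV tauXn Xneq X0 i f i0 iN).
Qed.
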